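(* Let $p$ be an odd prime, $\xi = e^{2\pi i/p^2}$, and $C$ the $p\times p$ cycle matrix. Let $\mathcal{T}$ be the set of all $2p\times 2p$ block-diagonal matrices of the form \[A = \operatorname{diag}\!\left(DC^k,\ 1,\ \xi^{k+a_1p},\ \xi^{2k+a_2p},\ \dots,\ \xi^{(p-1)k+a_{p-1}p}\right),\] where $D$ ranges over all $p\times p$ unitary diagonal matrices with $\det D=1$, $k\in\{0,1,\dots,p-1\}$, and $a_j\in\{0,1,\dots,p-1\}$ for $j=1,\dots,p-1$. Then $\mathcal{T}$ (a group of unitary $2p\times 2p$ matrices) is $\frac{1}{2p^2}$-argument-submultiplicative.
   Context: The $p\times p$ cycle matrix $C$ has entries $C_{j,j+1}=1$ for $j=1,\dots,p-1$, $C_{p,1}=1$, and all other entries $0$. For a complex number $z\neq 0$, $\arg(z)\in(-\pi,\pi]$ denotes its principal argument; $\sigma(M)$ denotes the spectrum of a matrix $M$. A group $\mathcal{G}$ of unitary $n\times n$ matrices is called $\varepsilon'$-argument-submultiplicative ($\varepsilon'$-ASM) if for every $A,B\in\mathcal{G}$ and every $\gamma\in\sigma(AB)$ there exist $\alpha\in\sigma(A)$ and $\beta\in\sigma(B)$ such that $\frac{1}{2\pi}\left|\arg\left(\frac{\alpha\beta}{\gamma}\right)\right|\le \varepsilon'$. *)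

(* Defs.v *)
From HB Require Import structures.
From mathcomp Require Import all_boot all_order all_algebra.
From mathcomp Require Import all_classical all_reals.
From mathcomp Require Import topology normedtype trigo.
From mathcomp Require Import complex.
Set Implicit Arguments. Unset Strict Implicit. Unset Printing Implicit Defensive.
Import Order.TTheory GRing.Theory Num.Theory.
Local Open Scope ring_scope.
Local Open Scope complex_scope.

Section Defs.
Variable R : realType.
Local Notation C := R[i].

Definition cmod (z : C) : R := Num.sqrt (complex.Re z ^+ 2 + complex.Im z ^+ 2).

(* principal argument arg z in (-pi, pi] (for z <> 0) *)
Definition carg (z : C) : R :=
  if 0 <= complex.Im z then acos (complex.Re z / cmod z) else - acos (complex.Re z / cmod z).

Definition expi (t : R) : C := cos t +i* sin t.

Definition spectrum n (M : 'M[C]_n) : C -> Prop := fun g => eigenvalue M g.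

Definition adjmx m n (M : 'M[C]_(m, n)) : 'M[C]_(n, m) := (map_mx Num.conj M)^T.
Definition unitary_mx n (M : 'M[C]_n) : Prop := M *m adjmx M = 1%:M.

Definition unitary_group n (G : 'M[C]_n -> Prop) : Prop :=
  [/\ G 1%:M,
      (forall A B, G A -> G B -> G (A *m B)),
      (forall A, G A -> exists2 B, G B & A *m B = 1%:M) &
      (forall A, G A -> unitary_mx A)].

Definition ASM n (eps : R) (G : 'M[C]_n -> Prop) : Prop :=
  unitary_group G /\
  forall A B, G A -> G B -> forall g, spectrum (A *m B) g ->
    exists a b, [/\ spectrum A a, spectrum B b &
      `|carg (a * b / g)| / (2 * pi) <= eps].

(* the p x p cycle matrix: C_{j,j+1} = 1, C_{p,1} = 1 (0-indexed: j -> j+1 mod p) *)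
Definition cycle_mx p : 'M[C]_p := \matrix_(i < p, j < p) ((j : nat) == (i.+1 %% p)%N)%:R.

Definition xi (p : nat) : C := expi (2 * pi / (p ^ 2)%:R).

Definition Tset (p : nat) : 'M[C]_(p + p) -> Prop := fun A =>
  exists (D : 'M[C]_p) (k : 'I_p) (a : 'I_p -> 'I_p),
    [/\ is_diag_mx D, unitary_mx D, \det D = 1 &
      A = block_mx (D *m (cycle_mx p) ^+ k) 0 0
            (diag_mx (\row_(j < p) if j == 0 :> nat then 1
                                  else xi p ^+ (j * k + a j * p)%N))].
End Defs.

(* Main.v *)
From HB Require Import structures.
From mathcomp Require Import all_boot all_order all_algebra.
From mathcomp Require Import all_classical all_reals.
From mathcomp Require Import topology normedtype trigo.
From mathcomp Require Import complex.
Require Import Defs.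
From mathcomp Require Import ring lra zify.
Import Order.TTheory GRing.Theory Num.Theory.
Local Open Scope ring_scope.
Local Open Scope complex_scope.


Section Trig.
Variable R : realType.
Local Notation C := R[i].

Lemma expiD (a b : R) : expi (a + b) = expi a * expi b.
Proof. rewrite /expi cosD sinD /=. congr (_ +i* _); ring. Qed.

Lemma expi0 : expi (0:R) = 1.
Proof. by rewrite /expi cos0 sin0. Qed.

Lemma cmod_expi (u : R) : cmod (expi u) = 1.
Proof. by rewrite /cmod /= cos2Dsin2 sqrtr1. Qed.

Lemma carg_expi (u : R) : - pi <= u <= pi -> `|carg (expi u)| = `|u|.
Proof.
move=> /andP[h1 h2]; rewrite /carg cmod_expi divr1 /=.
have [u0|u0] := leP 0 u.
  rewrite cosK; last by rewrite in_itv /= u0 h2.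
  by case: ifP => _; rewrite ?normrN.
rewrite cosKN; last by rewrite h1 ltW.
by case: ifP => _; rewrite ?normrN.
Qed.

Lemma expi_inv (t : R) : (expi t)^-1 = expi (- t).
Proof.
have h : expi t * expi (- t) = 1 by rewrite -expiD subrr expi0.
have nz : expi t != 0 by apply/eqP => e; move: h; rewrite e mul0r => /eqP; rewrite eq_sym oner_eq0.
by rewrite -[expi (- t)]mul1r -(mulVf nz) -mulrA h mulr1.
Qed.

Lemma expi_surj (z : C) : z * z^* = 1 -> exists2 t : R, 0 <= t <= pi *+ 2 & expi t = z.
Proof.
case: z => a b /= [] hab _.
have hab' : a ^+ 2 + b ^+ 2 = 1 by rewrite -hab; ring.
have ha : -1 <= a <= 1 by apply/andP; split; nra.
have [h0 hc] := acos_def ha.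
have hs : sin (acos a) = `|b|.
  rewrite sin_acos // -hab' addrAC subrr add0r sqrtr_sqr //.
have [b0|b0] := leP 0 b.
  exists (acos a); first by lra.
  by rewrite /expi hc hs ger0_norm.
exists (pi *+ 2 - acos a).
  have := acos_gt0 (x := a). have := acos_ltpi (x := a).
  have a1 : a != 1. apply/eqP=> e; move: hab'; rewrite e expr1n => /eqP.
     rewrite -subr_eq0 addrC addKr sqrf_eq0 => /eqP eb; lra.
  have a2 : a != -1. apply/eqP=> e; move: hab'; rewrite e sqrrN expr1n => /eqP.
     rewrite -subr_eq0 addrC addKr sqrf_eq0 => /eqP eb; lra.
  have := pi_gt0 R.
  move: ha => /andP[ha1 ha2].
  rewrite le_eqVlt eq_sym (negbTE a2) /= in ha1.
  rewrite le_eqVlt (negbTE a1) /= in ha2.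
  rewrite ha1 ha2 /=. move=> *. rewrite mulr2n. lra.
rewrite /expi.
have -> : pi *+ 2 - acos a = - acos a + pi *+ 2 by rewrite addrC.
rewrite cosD2pi sinD2pi cosN sinN hc hs ltr0_norm // opprK //.
Qed.

Lemma expiX (a : R) n : expi a ^+ n = expi (a *+ n).
Proof. elim: n => [|n IH]; first by rewrite expr0 mulr0n expi0.
by rewrite exprS IH mulrS expiD. Qed.

Lemma approx (N : nat) (z : C) : (0 < N)%N -> z * z^* = 1 ->
  exists m : nat, `|carg (expi (2 * pi / N%:R) ^+ m / z)| <= pi / N%:R.
Proof.
move=> N0 /expi_surj [t /andP[t0 t2] <-].
have Nr : (0:R) < N%:R by rewrite ltr0n.
have pi0 := pi_gt0 R.
set c := 2 * pi / N%:R.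
have c0 : 0 < c by rewrite /c divr_gt0 // mulr_gt0.
set x := t / c.
have x0 : 0 <= x by rewrite /x divr_ge0 // ltW.
exists (Num.trunc (x + 2^-1)).
set m := Num.trunc _.
have hm1 : m%:R <= x + 2^-1 by rewrite truncn_le addr_ge0 // invr_ge0 ler0n.
have hm2 : x + 2^-1 < m.+1%:R by rewrite truncnS_gt.
rewrite -[m.+1%:R]natr1 in hm2.
rewrite expiX expi_inv -expiD.
have eu : c *+ m + - t = c * (m%:R - x).
  rewrite /x mulrBr mulr_natr; congr (_ + _); rewrite mulrC divfK // gt_eqF //.
have hmx : `|m%:R - x| <= 2^-1.
  rewrite ler_norml; apply/andP; split; lra.
have hu : `|c *+ m + - t| <= pi / N%:R.
  rewrite eu normrM (gtr0_norm c0).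
  apply: le_trans (ler_wpM2l (ltW c0) hmx) _.
  rewrite /c (_ : 2 * pi / N%:R * 2^-1 = pi / N%:R) //; field; by rewrite pnatr_eq0 -lt0n.
have piN : (pi : R) / N%:R <= pi.
  rewrite ler_piMr ?(ltW pi0) // invf_le1 // ler1n //.
rewrite carg_expi //.
move: hu; rewrite ler_norml => /andP[h1 h2]; apply/andP; split; lra.
Qed.
End Trig.

Section Mon.
Variable R : realType.
Local Notation C := R[i].
Variable n : nat.
Local Notation p := n.+1.
Local Notation I := 'I_p.

Definition mon (d : I -> C) (k : I) : 'M[C]_p :=
  \matrix_(i, j) if j == i + k then d i else 0.

Lemma monM d e k l : mon d k *m mon e l = mon (fun i => d i * e (i + k)) (k + l).
Proof.
apply/matrixP => i j; rewrite !mxE (bigD1 (i + k)) //= big1 ?addr0.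
  by rewrite !mxE eqxx addrA; case: ifP => _; rewrite ?mulr0.
by move=> r /negbTE hr; rewrite !mxE hr mul0r.
Qed.

Lemma mon1 : mon (fun _ => 1) 0 = 1%:M.
Proof. by apply/matrixP => i j; rewrite !mxE addr0 eq_sym; case: eqP. Qed.

Lemma diag_mon (r : 'rV[C]_p) : diag_mx r = mon (fun i => r 0 i) 0.
Proof. by apply/matrixP => i j; rewrite !mxE addr0 eq_sym; case: eqP. Qed.

Lemma cycle_mon : cycle_mx R p = mon (fun _ => 1) Zp1.
Proof.
apply/matrixP => i j; rewrite !mxE.
have -> : ((j : nat) == (i.+1 %% p)%N) = (j == i + Zp1).
  by rewrite -val_eqE /= modnDmr addn1.
by case: ifP.
Qed.

Lemma cycleX (k : I) : cycle_mx R p ^+ k = mon (fun _ => 1) k.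
Proof.
have h t : cycle_mx R p ^+ t = mon (fun _ => 1) (Zp1 *+ t).
  elim: t => [|t IH]; first by rewrite expr0 mulr0n mon1.
  by rewrite exprS IH cycle_mon -mulmxE monM mulrS mulr1.
rewrite h Zp_mulrn; congr mon; apply/val_inj => /=.
by rewrite modnMml mul1n modn_small.
Qed.

Lemma adj_mon d k : adjmx (mon d k) = mon (fun i => (d (i - k))^*) (- k).
Proof.
apply/matrixP => i j; rewrite !mxE.
have -> : (j == i - k) = (i == j + k) by rewrite eq_sym subr_eq.
case: eqP => [->|_]; last by rewrite conjC0.
by rewrite addrK.
Qed.

Lemma mon_unitary d k : (forall i, d i * (d i)^* = 1) ->
  mon d k *m adjmx (mon d k) = 1%:M.
Proof.
move=> hd; rewrite adj_mon monM subrr -mon1; congr mon.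
by apply: funext => i; rewrite addrK hd.
Qed.

Lemma block_mulmx (A B A' B' : 'M[C]_p) :
  block_mx A 0 0 B *m block_mx A' 0 0 B' = block_mx (A *m A') 0 0 (B *m B').
Proof. by rewrite mulmx_block !mulmx0 !mul0mx !addr0 !add0r. Qed.

Lemma adj_block (A B : 'M[C]_p) :
  adjmx (block_mx A 0 0 B) = block_mx (adjmx A) 0 0 (adjmx B).
Proof.
rewrite /adjmx map_block_mx tr_block_mx.
by rewrite !(map_mx0 (Num.conj_op : {rmorphism C -> C})) !trmx0.
Qed.

Lemma expi2pi : expi (pi *+ 2 : R) = 1.
Proof. by rewrite /expi cos2pi sin2pi. Qed.

Lemma expi_conj (a : R) : expi a * (expi a)^* = 1.
Proof. rewrite /expi /=. have := cos2Dsin2 a. move=> h.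
congr (_ +i* _); rewrite -?h; ring. Qed.

Lemma xi_unit m : xi R p ^+ m * (xi R p ^+ m)^* = 1.
Proof. by rewrite rmorphXn -exprMn expi_conj expr1n. Qed.

Lemma xi_pp : xi R p ^+ (p * p) = 1.
Proof.
rewrite /xi expiX mulnn -[_ *+ (p ^ 2)]mulr_natr divfK ?pnatr_eq0 ?expn_eq0 //.
by rewrite mulr_natl expi2pi.
Qed.

Lemma xi_mod m t : xi R p ^+ (m + p * p * t) = xi R p ^+ m.
Proof. by rewrite exprD exprM xi_pp expr1n mulr1. Qed.

Definition Lf (k : I) (a : I -> I) (j : I) : C :=
  if j == 0 :> nat then 1 else xi R p ^+ (j * k + a j * p)%N.

Definition Ladd (k k' : I) (a a' : I -> I) (j : I) : I :=
  inZp (a j + a' j + j * ((k + k')%N %/ p)).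

Lemma Lf_mul k k' a a' j : Lf k a j * Lf k' a' j = Lf (k + k') (Ladd k k' a a') j.
Proof.
rewrite /Lf; case: eqP => [_|j0]; first by rewrite mulr1.
rewrite -exprD /Ladd /=.
set q := ((k + k')%N %/ p)%N; set X := (a j + a' j + j * q)%N.
have hk : (k + k' = q * p + (k + k') %% p)%N by rewrite /q -divn_eq.
have hX : (X = X %/ p * p + X %% p)%N by rewrite -divn_eq.
rewrite -[in RHS](xi_mod _ (X %/ p)); congr (_ ^+ _).
have e1 : (j * (k + k') = j * q * p + j * ((k + k') %% p))%N by rewrite {1}hk; nia.
move: e1 hX; rewrite /X; clearbody q.
move: (((a j + a' j + j * q)) %/ p)%N (((a j + a' j + j * q)) %% p)%N => u v e1 e2.
nia.
Qed.

Lemma Lf_inv k a : exists a', forall j, Lf k a j * Lf (- k) a' j = 1.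
Proof.
set Q := ((k + (- k : I))%N %/ p)%N.
exists (fun j => inZp (p - (a j + j * Q) %% p)) => j.
rewrite Lf_mul /Lf; case: eqP => // _.
have -> : Ladd k (- k) a (fun j => inZp (p - (a j + j * Q) %% p)) j = 0.
  apply/val_inj; rewrite /Ladd /= -/Q.
  rewrite addnAC modnDmr -modnDml.
  rewrite subnKC ?modnn //.
  by apply: ltnW; rewrite ltn_mod.
by rewrite subrr /= muln0 mul0n expr0.
Qed.

Definition Tm d k a : 'M[C]_(p + p) := block_mx (mon d k) 0 0 (mon (Lf k a) 0).
Definition good (d : I -> C) := (forall i, d i * (d i)^* = 1) /\ \prod_i d i = 1.

Lemma TsetE A : Tset A <-> exists d k a, good d /\ A = Tm d k a.
Proof.
split.
  move=> [D [k [a [/diag_mxP [r ->] uD dD ->]]]].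
  exists (fun i => r 0 i), k, a; split; first split.
  - move=> i; move: uD; rewrite /unitary_mx diag_mon adj_mon monM => /matrixP /(_ i i).
    by rewrite !mxE subrr !addr0 subr0 eqxx.
  - by rewrite -det_diag.
  rewrite /Tm; congr block_mx.
    rewrite diag_mon cycleX monM add0r; congr mon.
    by apply: funext => i; rewrite mulr1.
  by rewrite diag_mon; congr mon; apply: funext => j; rewrite mxE.
move=> [d [k [a [[ud pd] ->]]]].
exists (diag_mx (\row_i d i)), k, a; split.
- exact: diag_mx_is_diag.
- rewrite /unitary_mx diag_mon; apply: mon_unitary => i; rewrite mxE; exact: ud.
- by rewrite det_diag -[X in _ = X]pd; apply: eq_bigr => i _; rewrite mxE.
symmetry; rewrite /Tm; congr block_mx.
  rewrite diag_mon cycleX monM add0r; congr mon.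
  by apply: funext => i; rewrite mxE mulr1.
by rewrite diag_mon; congr mon; apply: funext => j; rewrite mxE.
Qed.

Lemma good_mul d d' k : good d -> good d' -> good (fun i => d i * d' (i + k)).
Proof.
move=> [u1 p1] [u2 p2]; split.
  by move=> i; rewrite rmorphM mulrACA u1 u2 mulr1.
rewrite big_split /= p1 mul1r -[RHS]p2.
by rewrite [RHS](reindex_inj (addIr k)).
Qed.

Lemma good_inv d k : good d -> good (fun i => (d (i - k))^*).
Proof.
move=> [u1 p1]; split.
  by move=> i; rewrite conjCK mulrC u1.
rewrite -rmorph_prod.
transitivity ((\prod_i d i)^*); last by rewrite p1 rmorph1.
by congr (_^*); rewrite [RHS](reindex_inj (addIr (- k))).
Qed.

Lemma Tm_mul d d' k k' a a' :
  Tm d k a *m Tm d' k' a' = Tm (fun i => d i * d' (i + k)) (k + k') (Ladd k k' a a').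
Proof.
rewrite /Tm block_mulmx !monM addr0; congr block_mx; congr mon.
by apply: funext => j; rewrite addr0 Lf_mul.
Qed.

Lemma Lf_unit k a j : Lf k a j * (Lf k a j)^* = 1.
Proof. by rewrite /Lf; case: ifP => _; rewrite ?conjC1 ?mulr1 ?xi_unit. Qed.

Lemma Tm_unitary d k a : good d -> Tm d k a *m adjmx (Tm d k a) = 1%:M.
Proof.
move=> [u1 _]; rewrite /Tm adj_block block_mulmx !mon_unitary //.
  by rewrite -scalar_mx_block.
exact: Lf_unit.
Qed.

Lemma T_group : unitary_group (@Tset R p).
Proof.
split.
- apply/TsetE; exists (fun _ => 1), 0, (fun _ => 0); split.
    split; first by move=> i; rewrite conjC1 mulr1.
    by rewrite big1.
  rewrite /Tm mon1 (scalar_mx_block p p 1); congr block_mx.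
  rewrite -mon1; congr mon; apply: funext => j.
  by rewrite /Lf /= muln0 mul0n expr0; case: ifP.
- move=> A B /TsetE [d [k [a [gd ->]]]] /TsetE [d' [k' [a' [gd' ->]]]].
  apply/TsetE; rewrite Tm_mul.
  exists (fun i => d i * d' (i + k)), (k + k'), (Ladd k k' a a'); split => //.
  exact: good_mul.
- move=> A /TsetE [d [k [a [gd ->]]]].
  have [a' ha'] := Lf_inv k a.
  exists (Tm (fun i => (d (i - k))^*) (- k) a').
    by apply/TsetE; exists (fun i => (d (i - k))^*), (- k), a'; split => //; exact: good_inv.
  rewrite /Tm block_mulmx -adj_mon mon_unitary; last by case: gd.
  rewrite monM addr0 -mon1 (scalar_mx_block p p 1) -mon1; congr block_mx; congr mon.
  by apply: funext => j; rewrite addr0 ha'.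
- move=> A /TsetE [d [k [a [gd ->]]]]; exact: Tm_unitary.
Qed.

Lemma eig_block (M N : 'M[C]_p) g :
  eigenvalue (block_mx M 0 0 N) g = eigenvalue M g || eigenvalue N g.
Proof.
apply/eigenvalueP/orP.
  case=> v hv nz; rewrite -[v]hsubmxK in hv nz.
  rewrite mul_row_block !mulmx0 addr0 add0r scale_row_mx in hv.
  case/eq_row_mx: hv => h1 h2; rewrite row_mx_eq0 negb_and in nz.
  by case/orP: nz => nz; [left|right]; apply/eigenvalueP; eexists; eauto.
case=> /eigenvalueP [v hv nz].
  exists (row_mx v 0); last by rewrite row_mx_eq0 negb_and nz.
  by rewrite mul_row_block !mulmx0 mul0mx !addr0 ?add0r scale_row_mx hv scaler0.
exists (row_mx 0 v); last by rewrite row_mx_eq0 negb_and nz orbT.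
by rewrite mul_row_block !mulmx0 !mul0mx !add0r scale_row_mx hv scaler0.
Qed.

Lemma vmon (v : 'rV[C]_p) d k j : (v *m mon d k) 0 j = v 0 (j - k) * d (j - k).
Proof.
rewrite mxE (bigD1 (j - k)) //= big1 ?addr0; first by rewrite mxE subrK eqxx.
move=> r hr; rewrite mxE.
have -> : (j == r + k) = false by apply/negbTE; rewrite -subr_eq eq_sym.
by rewrite mulr0.
Qed.

Lemma eigmonE (v : 'rV[C]_p) d k g :
  (v *m mon d k = g *: v) <-> forall i, v 0 i * d i = g * v 0 (i + k).
Proof.
split.
  by move=> /matrixP h i; have := h 0 (i + k); rewrite vmon mxE addrK.
move=> h; apply/matrixP => i0 j; rewrite ord1 vmon mxE h subrK //.
Qed.

Lemma rv_nz (v : 'rV[C]_p) : v != 0 -> exists i, v 0 i != 0.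
Proof.
move=> nz; case: (pickP (fun i => v 0 i != 0)) => [i hi|h]; first by exists i.
move/eqP: nz; case.
by apply/matrixP => i j; rewrite ord1 mxE; move: (h j) => /= /negbFE /eqP.
Qed.

Lemma eig_mon0 d j : eigenvalue (mon d 0) (d j).
Proof.
apply/eigenvalueP; exists (delta_mx 0 j).
  apply/eigmonE => i; rewrite !mxE addr0 eqxx /=.
  by case: eqP => [->|_]; rewrite ?mulr1 ?mul0r ?mulr0 ?mul1r.
apply/eqP => /matrixP /(_ 0 j); rewrite !mxE !eqxx /= => /eqP.
by rewrite oner_eq0.
Qed.

Lemma eig_mon0_inv d g : eigenvalue (mon d 0) g -> exists i, g = d i.
Proof.
move=> /eigenvalueP [v /eigmonE h /rv_nz [i nz]].
exists i; apply: (mulIf nz); by rewrite [RHS]mulrC h addr0.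
Qed.

Lemma mulrn_val (k : I) t : val (k *+ t) = (k * t %% p)%N.
Proof. by rewrite Zp_mulrn. Qed.

Lemma mulrnp (k : I) : k *+ p = 0.
Proof. by apply/val_inj; rewrite mulrn_val /= modnMl. Qed.

Lemma orb_inj (k : I) : k != 0 -> prime p -> injective (fun t : I => k *+ t).
Proof.
move=> k0 pp.
have k0' : (0 < val k)%N.
  by move: k0; rewrite lt0n; apply: contra => /eqP e; apply/eqP/val_inj.
have kp : ~~ (p %| k)%N by apply/negP => /(dvdn_leq k0'); rewrite leqNgt ltn_ord.
have cop : coprime p k by rewrite prime_coprime.
suff H (t t' : I) : (t <= t')%N -> k *+ t = k *+ t' -> t = t'.
  move=> t t' e; case: (leqP t t') => h; first exact: H.
  by apply/esym/H => //; apply: ltnW.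
move=> le /(congr1 val); rewrite !mulrn_val => /eqP.
rewrite eq_sym eqn_mod_dvd ?leq_mul2l ?le ?orbT // -mulnBr Gauss_dvdr //.
move=> dv; apply/val_inj/eqP; rewrite eqn_leq le /= -subn_eq0.
apply: contraLR dv; rewrite -lt0n => h; apply/negP => /(dvdn_leq h).
rewrite leqNgt; move/negP; apply.
by apply: leq_ltn_trans (leq_subr _ _) (ltn_ord t').
Qed.

Lemma prod_orb (d : I -> C) (k : I) i : k != 0 -> prime p ->
  \prod_(t < p) d (i + k *+ t) = \prod_j d j.
Proof.
move=> k0 pp.
have inj : injective (fun t : I => i + k *+ t).
  by move=> t t' /addrI; apply: orb_inj.
by rewrite [RHS](reindex_inj inj).
Qed.

Lemma eig_mon_pow d k g : k != 0 -> prime p -> eigenvalue (mon d k) g ->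
  g ^+ p = \prod_j d j.
Proof.
move=> k0 pp /eigenvalueP [v /eigmonE h /rv_nz [i0 nz]].
have claim m : v 0 i0 * \prod_(t < m) d (i0 + k *+ t) = g ^+ m * v 0 (i0 + k *+ m).
  elim: m => [|m IH]; first by rewrite big_ord0 mulr1 expr0 mul1r mulr0n addr0.
  rewrite big_ord_recr /= mulrA IH -mulrA h exprSr -mulrA; congr (_ * (_ * _)).
  by rewrite mulrSr addrA.
have := claim p; rewrite mulrnp addr0 prod_orb // => e.
by apply: (mulIf nz); rewrite -e mulrC.
Qed.

Lemma eig_mon_root d k g : k != 0 -> prime p -> g != 0 -> g ^+ p = \prod_j d j ->
  eigenvalue (mon d k) g.
Proof.
move=> k0 pp g0 hg.
have finj := @orb_inj k k0 pp.

pose w t := g ^- t * \prod_(s < t) d (k *+ s).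
pose v := \row_j w (invF finj j).
have fK x : k *+ invF finj x = x := f_invF finj x.
have f0 : invF finj 0 = 0.
  by apply: (finj); rewrite /= fK mulr0n.
apply/eigenvalueP; exists v.
  apply/eigmonE => i; rewrite !mxE.
  set t := invF finj i.
  have hi : i = k *+ t by rewrite /t fK.
  have := ltn_ord t; rewrite ltnS leq_eqVlt => /orP [/eqP tn | tn].
    have -> : invF finj (i + k) = 0.
      by rewrite -f0; congr invF; rewrite hi -mulrSr tn mulrnp.
    rewrite /w big_ord0 expr0 invr1 !mulr1.
    rewrite {1}hi -mulrA -(big_ord_recr t (fun s => d (k *+ s))) tn.
    have -> : \prod_(s < n.+1) d (k *+ s) = \prod_j d j.
      by rewrite -(prod_orb d k 0 k0 pp); apply: eq_bigr => s _; rewrite add0r.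
    by rewrite -hg exprSr mulrA mulVf ?mul1r // expf_neq0.
  have -> : invF finj (i + k) = Ordinal (tn : t.+1 < p)%N.
    by apply: (finj); rewrite /= fK /= hi mulrSr.
  rewrite /w /= big_ord_recr /= -hi.
  by rewrite exprSr invfM [RHS]mulrA [g * (_ / g)]mulrC divfK // !mulrA.
apply/eqP => /matrixP /(_ 0 0); rewrite !mxE f0 /w big_ord0 expr0 invr1 mulr1 => /eqP.
by rewrite oner_eq0.
Qed.

Lemma Lf0 k a : Lf k a 0 = 1.
Proof. by rewrite /Lf. Qed.

Lemma Lf_nz k a j : Lf k a j != 0.
Proof.
apply/eqP => e; have := Lf_unit k a j; rewrite e mul0r => /eqP.
by rewrite eq_sym oner_eq0.
Qed.

Lemma eigT_up d k a x : eigenvalue (mon d k) x -> spectrum (Tm d k a) x.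
Proof. by rewrite /spectrum /Tm eig_block => ->. Qed.

Lemma eigT_lo d k a j : spectrum (Tm d k a) (Lf k a j).
Proof. by rewrite /spectrum /Tm eig_block eig_mon0 orbT. Qed.

Lemma carg1 : carg (1 : C) = 0.
Proof.
rewrite /carg /cmod /= expr1n expr0n /= addr0 sqrtr1 divr1 lexx.
by rewrite -cos0 cosK // in_itv /= lexx ltW // pi_gt0.
Qed.

Lemma bound_ok (x : C) : `|carg x| <= pi / (p ^ 2)%:R ->
  `|carg x| / (2 * pi) <= 1 / (2 * (p ^ 2)%:R).
Proof.
move=> h; have pi0 := pi_gt0 R.
have N0 : ((p ^ 2)%:R : R) != 0 by rewrite pnatr_eq0 expn_eq0.
rewrite ler_pdivrMr ?mulr_gt0 //; apply: le_trans h _.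
rewrite le_eqVlt; apply/orP; left; apply/eqP; field.
by rewrite nat1r pnatr_eq0.
Qed.

Lemma ratio1_ok (a b g : C) : g != 0 -> a * b = g ->
  `|carg (a * b / g)| / (2 * pi) <= 1 / (2 * (p ^ 2)%:R).
Proof.
move=> g0 ->; rewrite mulfV // carg1 normr0 mul0r.
by rewrite divr_ge0 // mulr_ge0 // ler0n.
Qed.

Lemma unit_nz (z : C) : z * z^* = 1 -> z != 0.
Proof. by move=> h; apply/eqP => e; move: h; rewrite e mul0r => /eqP; rewrite eq_sym oner_eq0. Qed.

Lemma xi_root (k' : I) (a' : I -> I) (j : I) (m : nat) :
  k' *+ j = inZp m -> (xi R p ^+ m) ^+ p = (Lf k' a' j) ^+ p.
Proof.
move=> /(congr1 val); rewrite mulrn_val /= => hj.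
rewrite -exprM /Lf; case: eqP => [j0|j0].
  rewrite j0 muln0 mod0n in hj.
  rewrite expr1n -[RHS](expr0 (xi R p)) -(xi_mod 0 (m %/ p)); congr (_ ^+ _).
  by rewrite {1}(divn_eq m p) -hj addn0 add0n; nia.
rewrite -exprM.
set r := (m %% p)%N.
rewrite (_ : (m * p = r * p + p * p * (m %/ p))%N); last first.
  by rewrite {1}(divn_eq m p) -/r; nia.
rewrite (_ : ((j * k' + a' j * p) * p = r * p + p * p * ((j * k') %/ p + a' j))%N); last first.
  have hj' : ((j * k') %% p = r)%N by rewrite mulnC hj.
  by rewrite {1}(divn_eq (j * k') p) hj'; nia.
by rewrite !xi_mod.
Qed.

Lemma main_n : prime p -> ASM (1 / (2 * (p ^ 2)%:R)) (@Tset R p).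
Proof.
move=> pp; split; first exact: T_group.
move=> A B /TsetE [d [k [a [gd ->]]]] /TsetE [d' [k' [a' [gd' ->]]]] g.
rewrite Tm_mul /spectrum {1}/Tm eig_block => /orP [hg|hg]; last first.
  have [j ->] := eig_mon0_inv _ _ hg.
  exists (Lf k a j), (Lf k' a' j); split; [exact: eigT_lo | exact: eigT_lo|].
  by apply: ratio1_ok; [exact: Lf_nz | rewrite Lf_mul].
have gd'' := @good_mul d d' k gd gd'.
case: (eqVneq (k + k') 0) => hkk.
  rewrite hkk in hg; have [i ->] := eig_mon0_inv _ _ hg.
  have gu := gd''.1 i.
  case: (eqVneq k 0) => hk.
    have hk' : k' = 0 by move: hkk; rewrite hk add0r.
    subst k k'; exists (d i), (d' (i + 0)); split.
    - by apply: eigT_up; exact: eig_mon0.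
    - by apply: eigT_up; exact: eig_mon0.
    - by apply: ratio1_ok => //; apply: unit_nz.
  have hk' : k' != 0.
    by apply: contra hk => /eqP e; move: hkk; rewrite e addr0 => ->.
  have N0 : (0 < p ^ 2)%N by rewrite expn_gt0.
  have [m hm] := @approx R (p ^ 2)%N _ N0 gu.
  have finj := @orb_inj k' hk' pp.
  set j := invF finj (inZp m).
  have hj : k' *+ j = inZp m := f_invF finj (inZp m).
  have b0 : Lf k' a' j != 0 := Lf_nz k' a' j.
  have x0 : xi R p != 0 by apply: unit_nz; have := xi_unit 1; rewrite !expr1.
  exists (xi R p ^+ m / Lf k' a' j), (Lf k' a' j); split.
  - apply: eigT_up; apply: eig_mon_root => //.
      by rewrite mulf_neq0 ?invr_eq0 // expf_neq0.
    by rewrite gd.2 exprMn exprVn (@xi_root k' a' j m hj) mulfV // expf_neq0.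
  - exact: eigT_lo.
  - by rewrite divfK //; apply: bound_ok.
have gp : g ^+ p = 1 by rewrite (eig_mon_pow _ _ _ hkk pp hg) gd''.2.
have g0 : g != 0.
  by apply/eqP => e; move: gp; rewrite e expr0n /= => /eqP; rewrite eq_sym oner_eq0.
case: (eqVneq k 0) => hk.
  have hk' : k' != 0 by move: hkk; rewrite hk add0r.
  exists 1, g; split.
  - by rewrite -(Lf0 k a); exact: eigT_lo.
  - by apply: eigT_up; apply: eig_mon_root => //; rewrite gp gd'.2.
  - by apply: ratio1_ok => //; rewrite mul1r.
exists g, 1; split.
- by apply: eigT_up; apply: eig_mon_root => //; rewrite gp gd.2.
- by rewrite -(Lf0 k' a'); exact: eigT_lo.
- by apply: ratio1_ok => //; rewrite mulr1.
Qed.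
End Mon.

Theorem theorem5 (R : realType) (p : nat) :
  prime p -> odd p ->
  ASM (1 / (2 * (p ^ 2)%:R)) (@Tset R p).
Proof.
case: p => [//|n] pp _.
exact: main_n.
Qed.
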